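(* Let $\mathcal{P}\subseteq\mathbb{Z}_{\geq0}$, working with formal power series over a commutative ring $R\supseteq\mathbb{Q}$. Then $$F^{\mathrm{CYC},\mathcal{P}}(u,z)=\Big(1-u z\, e_{\mathcal{P}-1}\big(T^{\mathcal{P}}(z)\big)\Big)^{-1}.$$
   Context: $[n]=\{1,\dots,n\}$. $e_\mathcal{P}(z)=\sum_{n\in\mathcal{P}}z^n/n!$, $\mathcal{P}-1=\{n-1:n\in\mathcal{P},n\ge1\}$. $T^\mathcal{P}(z)=\sum_t z^{|t|}/|t|!$ over labeled rooted trees $t$ (trees on vertex set $[|t|]$ with a distinguished root) in which every vertex has a number of children (neighbours farther from the root) in $\mathcal{P}$. $F^{\mathrm{CYC},\mathcal{P}}(u,z)=\sum_{n\ge0}\frac{z^n}{n!}\sum_f u^{\mathrm{cyc}(f)}$, summing over functions $f:[n]\to[n]$ with $|f^{-1}(x)|\in\mathcal{P}$ for all $x$, where $\mathrm{cyc}(f)$ is the number of $x\in[n]$ with $f^j(x)=x$ for some $j\ge1$. *)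

(* Defs.v *)
From mathcomp Require Import all_boot all_order all_algebra.
Set Implicit Arguments. Unset Strict Implicit. Unset Printing Implicit Defensive.
Import GRing.Theory.
Local Open Scope ring_scope.

(** Formal power series in one variable z over a ring S, represented by their
    coefficient sequence n |-> [z^n]. *)
Definition fps_mul (S : nzRingType) (a b : nat -> S) : nat -> S :=
  fun n => \sum_(i < n.+1) a i * b (n - i)%N.
Definition fps_one (S : nzRingType) : nat -> S :=
  fun n => if n == 0%N then 1 else 0.
Definition fps_pow (S : nzRingType) (a : nat -> S) (k : nat) : nat -> S :=
  iter k (fps_mul a) (@fps_one S).
(** Composition g(h(z)); this is the genuine composition whenever h 0 = 0
    (only then do the terms m > n not contribute to [z^n]). *)
Definition fps_comp (S : nzRingType) (g h : nat -> S) : nat -> S :=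
  fun n => \sum_(m < n.+1) g m * fps_pow h m n.

Definition expP (R : unitRingType) (P : pred nat) : nat -> R :=
  fun n => if P n then ((n`!)%:R)^-1 else 0.
Definition predm1 (P : pred nat) : pred nat := fun m => P m.+1.

(** A labeled rooted tree on vertex set 'I_n (= [n] shifted), encoded by its
    parent map: par x = None iff x is the root, par x = Some y iff y is the
    neighbour of x closer to the root. *)
Definition is_rooted_tree (n : nat) (par : {ffun 'I_n -> option 'I_n}) : bool :=
  (#|[set x | par x == None]| == 1%N) &&
  [forall x, iter n (obind (fun y => par y)) (Some x) == None].
Definition nchildren (n : nat) (par : {ffun 'I_n -> option 'I_n}) (x : 'I_n) : nat :=
  #|[set y | par y == Some x]|.
Definition tree_count (P : pred nat) (n : nat) : nat :=
  #|[set par : {ffun 'I_n -> option 'I_n} |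
      is_rooted_tree par && [forall x, P (nchildren par x)]]|.
Definition TP (R : unitRingType) (P : pred nat) : nat -> R :=
  fun n => (tree_count P n)%:R * ((n`!)%:R)^-1.

(** cyc(f) = #{ x | f^j(x) = x for some j >= 1 } (for f on an n-set, j <= n suffices) *)
Definition cyc (n : nat) (f : {ffun 'I_n -> 'I_n}) : nat :=
  #|[set x | [exists j : 'I_n, iter j.+1 f x == x]]|.
Definition fibresP (P : pred nat) (n : nat) (f : {ffun 'I_n -> 'I_n}) : bool :=
  [forall x, P #|[set y | f y == x]|].

(** F^{CYC,P}(u,z), as a power series in z whose coefficients are polynomials
    in u:  [z^n] = (1/n!) sum_{f} u^{cyc f}. *)
Definition FCYC (R : comUnitRingType) (P : pred nat) : nat -> {poly R} :=
  fun n => ((n`!)%:R)^-1 *: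
    \sum_(f : {ffun 'I_n -> 'I_n} | fibresP P f) 'X^(cyc f).

Definition denomCYC (R : comUnitRingType) (P : pred nat) : nat -> {poly R} :=
  let A := fps_comp (expP R (predm1 P)) (TP R P) in
  fun n => match n with
           | 0 => 1
           | k.+1 => - ('X * (A k)%:P)
           end.

(* Main.v *)
Require Import Defs.
From mathcomp Require Import all_boot all_order all_algebra all_fingroup zify.
Set Implicit Arguments. Unset Strict Implicit. Unset Printing Implicit Defensive.

Lemma iter_short (T : finType) (s : T -> T) a b k :
  iter k s a = b -> exists2 k', k' < #|T| & iter k' s a = b.
Proof.
elim/ltn_ind: k => k IH H.
case: (ltnP k #|T|) => [lt|ge]; first by exists k.
pose g (i : 'I_k.+1) := iter i s a.
have : ~~ injectiveb g.
  apply/negP => /injectiveP inj; move: (leq_card _ inj).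
  by rewrite card_ord ltnNge ge.
case/injectivePn => i [j neq eqg].
wlog lij : i j neq eqg / i < j.
  move=> W; case: (ltngtP i j) => [l|l|e]; first exact: W neq eqg l.
    by apply: (W j i); rewrite // eq_sym.
  by move/eqP: neq; case; apply: val_inj.
have jk : j <= k by rewrite -ltnS ltn_ord.
apply: (IH (k - j + i)).
  move: lij jk; clear; lia.
rewrite iterD; rewrite /g in eqg; rewrite eqg -iterD subnK //.
Qed.

Section Forest.
Variable U : finType.
Implicit Types (p q : {ffun U -> option U}) (S : {set U}).

Definition st p : option U -> option U := obind p.
Definition onS S p := [forall x, (x \notin S) ==> (p x == None)] &&
  [forall x, forall y, (p x == Some y) ==> (y \in S)].
Definition acyc p := [forall x, iter #|U| (st p) (Some x) == None].
Definition roots S p := [set x in S | p x == None].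
Definition chl p x := #|[set y | p y == Some x]|.
Definition forest (Q P K : pred nat) S p :=
  [&& onS S p, acyc p, K #|roots S p| &
   [forall x in S, if p x == None then Q (chl p x) else P (chl p x)]].
Definition H Q P K S := #|[set p | forest Q P K S p]|.

Lemma iter_st_None p k : iter k (st p) None = None.
Proof. by elim: k => //= k ->. Qed.

Lemma onSP S p : reflect ((forall x, x \notin S -> p x = None) /\
   (forall x y, p x = Some y -> y \in S)) (onS S p).
Proof.
apply: (iffP andP) => [[/forallP H1 /forallP H2]|[H1 H2]]; split.
- by move=> x xS; move/implyP: (H1 x) => /(_ xS)/eqP.
- by move=> x y e; move/forallP: (H2 x) => /(_ y)/implyP; apply; rewrite e.
- by apply/forallP => x; apply/implyP => /H1 ->.
- by apply/forallP => x; apply/forallP => y; apply/implyP => /eqP /H2.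
Qed.

Lemma acycP p : reflect (forall x, exists k, iter k (st p) (Some x) = None) (acyc p).
Proof.
apply: (iffP forallP) => [H x|H x]; first by exists #|U|; apply/eqP.
case: (H x) => k /iter_short [k' lt e].
rewrite card_option ltnS in lt.
by rewrite -(subnK lt) iterD e iter_st_None.
Qed.

Lemma forestP (Q P K : pred nat) S p : reflect
  [/\ onS S p, acyc p, K #|roots S p| &
   forall x, x \in S -> if p x == None then Q (chl p x) else P (chl p x)]
  (forest Q P K S p).
Proof.
apply: (iffP and4P) => [[a b c /forall_inP d]|[a b c d]]; split => //.
by apply/forall_inP.
Qed.

End Forest.

Section Transport.
Variables (U V : finType) (h : U -> V).
Hypothesis hinj : injective h.

Definition tr (p : {ffun U -> option U}) : {ffun V -> option V} :=
  [ffun y => if [pick x | h x == y] is Some x then omap h (p x) else None].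
Definition back (p : {ffun V -> option V}) : {ffun U -> option U} :=
  [ffun x => obind (fun y => [pick z | h z == y]) (p (h x))].

Lemma pick_h x : [pick z | h z == h x] = Some x.
Proof.
case: pickP => [z /eqP/hinj -> //|/(_ x)]; by rewrite eqxx.
Qed.

Lemma tr_h p x : tr p (h x) = omap h (p x).
Proof. by rewrite ffunE pick_h. Qed.

Lemma tr_out p y : (forall x, h x != y) -> tr p y = None.
Proof. by move=> H; rewrite ffunE; case: pickP => // x; rewrite (negbTE (H x)). Qed.

Lemma back_tr p : back (tr p) = p.
Proof.
apply/ffunP => x; rewrite ffunE tr_h; case: (p x) => //= z; by rewrite pick_h.
Qed.

Lemma tr_back p (S : {set U}) : onS (h @: S) p -> tr (back p) = p.
Proof.
case/onSP => H1 H2; apply/ffunP => y; rewrite ffunE.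
case: pickP => [x /eqP <-|nh].
  rewrite ffunE; case e: (p (h x)) => [z|//] /=.
  move: (H2 _ _ e) => /imsetP [w _ ->]; by rewrite pick_h.
case e: (p y) => [z|//]; symmetry; rewrite -e; apply: H1.
apply/negP => /imsetP [w _ ey]; move: (nh w); by rewrite ey eqxx.
Qed.

Lemma iter_tr p k x :
  iter k (st (tr p)) (Some (h x)) = omap h (iter k (st p) (Some x)).
Proof.
elim: k => //= k ->; case: (iter k (st p) (Some x)) => //= z; exact: tr_h.
Qed.

Lemma onS_tr (S : {set U}) p : onS (h @: S) (tr p) = onS S p.
Proof.
apply/onSP/onSP => [[H1 H2]|[H1 H2]]; split.
- move=> x xS; have := H1 (h x); rewrite tr_h mem_imset // => /(_ xS).
  by case: (p x).
- move=> x y e; have := H2 (h x) (h y); rewrite tr_h e mem_imset //; exact.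
- move=> y yS; case: (pickP (fun x => h x == y)) => [x /eqP ey|nh].
    rewrite -ey tr_h H1 //; apply: contra yS => xS; by rewrite -ey imset_f.
  by apply: tr_out => x; rewrite nh.
- move=> y z; case: (pickP (fun x => h x == y)) => [x /eqP <-|nh].
    rewrite tr_h; case e: (p x) => [w|//] [<-]; by rewrite imset_f // (H2 _ _ e).
  by rewrite tr_out // => x; rewrite nh.
Qed.

Lemma acyc_tr p : acyc (tr p) = acyc p.
Proof.
apply/acycP/acycP => H x.
- case: (H (h x)) => k; rewrite iter_tr => e; exists k.
  by case: (iter k (st p) (Some x)) e.
- case: (pickP (fun z => h z == x)) => [z /eqP <-|nh].
    case: (H z) => k e; exists k; by rewrite iter_tr e.
  by exists 1; rewrite /= tr_out // => z; rewrite nh.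
Qed.

Lemma roots_tr (S : {set U}) p : roots (h @: S) (tr p) = h @: roots S p.
Proof.
apply/setP => y; rewrite inE; apply/andP/imsetP => [[/imsetP [x xS ->]]|[x]].
  rewrite tr_h => e; exists x => //; rewrite inE xS; by case: (p x) e.
rewrite inE => /andP [xS /eqP e] ->; by rewrite imset_f // tr_h e.
Qed.

Lemma chl_tr p x : chl (tr p) (h x) = chl p x.
Proof.
rewrite /chl -(card_imset _ hinj); apply: eq_card => y; rewrite inE.
apply/idP/imsetP => [|[z]].
  case: (pickP (fun z => h z == y)) => [z /eqP <-|nh].
    rewrite tr_h => e; exists z => //; rewrite inE; by case: (p z) e => //= w /eqP [/hinj ->].
  by rewrite tr_out // => z; rewrite nh.
by rewrite inE => /eqP e ->; rewrite tr_h e.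
Qed.

Lemma forest_tr (Q P K : pred nat) (S : {set U}) p : forest Q P K (h @: S) (tr p) = forest Q P K S p.
Proof.
rewrite /forest onS_tr acyc_tr roots_tr card_imset //; congr [&& _, _, _ & _].
apply/forall_inP/forall_inP => H x.
  move=> xS; have := H (h x); rewrite imset_f // tr_h chl_tr => /(_ isT).
  by case: (p x).
case/imsetP => z zS ->; rewrite tr_h chl_tr; have := H z zS; by case: (p z).
Qed.

Lemma H_tr (Q P K : pred nat) (S : {set U}) : H Q P K (h @: S) = H Q P K S.
Proof.
rewrite /H -(card_imset _ (can_inj back_tr)); apply: eq_card => p.
rewrite inE; apply/idP/imsetP => [F|[q]]; last by rewrite inE => F ->; rewrite forest_tr.
have o : onS (h @: S) p by case/and4P: F.
exists (back p); last by rewrite (tr_back o).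
by rewrite inE -forest_tr (tr_back o).
Qed.

End Transport.

Lemma H_card (U : finType) (Q P K : pred nat) (S : {set U}) :
  H Q P K S = H Q P K [set: 'I_#|S|].
Proof.
have e : (@enum_val U (mem S)) @: [set: 'I_#|S|] = S.
  apply/setP => y; apply/imsetP/idP => [[i _ ->]|yS]; first exact: enum_valP.
  by exists (enum_rank_in yS y); rewrite ?inE // enum_rankK_in.
by rewrite -{1}e H_tr //; exact: enum_val_inj.
Qed.

Section Split.
Variable U : finType.
Implicit Types (p q : {ffun U -> option U}) (S A : {set U}).

Definition inA A (o : option U) := if o is Some z then z \in A else true.

Lemma iter_agree A p q x k : (forall z, z \in A -> q z = p z) ->
  (forall z y, z \in A -> p z = Some y -> y \in A) -> x \in A ->
  iter k (st q) (Some x) = iter k (st p) (Some x) /\ inA A (iter k (st p) (Some x)).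
Proof.
move=> Hq Hc xA; elim: k => [|k [IH1 IH2]] //=.
rewrite IH1; case: (iter k (st p) (Some x)) IH2 => //= z zA.
rewrite /st /= Hq //; split => //; case e: (p z) => //=; exact: Hc e.
Qed.

Definition reach p x r := [exists k : 'I_#|U|.+1, iter k (st p) (Some x) == Some r].

Lemma reachP p x r : reflect (exists k, iter k (st p) (Some x) = Some r) (reach p x r).
Proof.
apply: (iffP existsP) => [[k /eqP e]|[k /iter_short [k' lt e]]]; first by exists k.
rewrite card_option in lt; by exists (Ordinal lt); apply/eqP.
Qed.

Lemma reach_root S p x : onS S p -> acyc p -> x \in S ->
  exists2 y, y \in roots S p & reach p x y.
Proof.
move=> /onSP [H1 H2] /acycP Hac xS; case: (Hac x) => k.
elim: k x xS => [|k IH] x xS //.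
rewrite iterSr /st /= => e.
case ex: (p x) e => [y|] e.
- have yS := H2 _ _ ex; case: (IH y yS e) => z zr /reachP [j ej].
  by exists z => //; apply/reachP; exists j.+1; rewrite iterSr /st /= ex.
- exists x; first by rewrite inE xS ex.
  by apply/reachP; exists 0.
Qed.

Lemma reach_None p x y : p x = None -> reach p x y -> x = y.
Proof.
move=> px /reachP [[|k]]; first by case.
by rewrite iterSr /st /= px iter_st_None.
Qed.

Lemma reach_step p x y r : p x = Some y -> reach p y r -> reach p x r.
Proof.
move=> pxy /reachP [k e]; apply/reachP; exists k.+1; by rewrite iterSr /st /= pxy.
Qed.

Lemma reach_back p x y r : p x = Some y -> reach p x r -> x != r -> reach p y r.
Proof.
move=> pxy /reachP [[|k]]; first by move=> [->]; rewrite eqxx.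
rewrite iterSr /st /= pxy => e _; apply/reachP; by exists k.
Qed.

Lemma roots_sub S p : roots S p \subset S.
Proof. by apply/subsetP => x; rewrite inE => /andP []. Qed.

Lemma nroots_le S p : #|roots S p| <= #|S|.
Proof. exact/subset_leq_card/roots_sub. Qed.

Definition restr A p : {ffun U -> option U} := [ffun x => if x \in A then p x else None].
Definition merge A p1 p2 : {ffun U -> option U} := [ffun x => if x \in A then p1 x else p2 x].
Definition comp S p r := [set x in S | reach p x r].

Lemma acyc_agree A p q : acyc p -> (forall z, z \in A -> q z = p z) ->
  (forall z y, z \in A -> p z = Some y -> y \in A) -> (forall z, z \notin A -> q z = None) -> acyc q.
Proof.
move=> /acycP Hp Hq Hc Hout; apply/acycP => x.
case xA: (x \in A); last by exists 1; rewrite /= /st /= Hout ?xA.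
case: (Hp x) => k e; exists k; by case: (iter_agree k Hq Hc xA) => ->.
Qed.

Lemma chl_agree p q x : (forall y, (q y == Some x) = (p y == Some x)) -> chl q x = chl p x.
Proof. by move=> E; apply: eq_card => y; rewrite !inE E. Qed.

Section Decomp.
Variables (Q P : pred nat) (S : {set U}) (p : {ffun U -> option U}) (r : U).
Hypotheses (pS : onS S p) (pac : acyc p) (rR : r \in roots S p).
Let S1 := comp S p r.

Lemma pout x : x \notin S -> p x = None.
Proof. by case/onSP: pS => H _; apply: H. Qed.
Lemma pval x y : p x = Some y -> y \in S.
Proof. by case/onSP: pS => _ H; apply: H. Qed.
Lemma pr : p r = None.
Proof. by move: rR; rewrite inE => /andP [_ /eqP]. Qed.
Lemma rS : r \in S.
Proof. by move: rR; rewrite inE => /andP []. Qed.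

Lemma S1_fwd x y : x \in S1 -> p x = Some y -> y \in S1.
Proof.
rewrite !inE => /andP [xS xr] pxy; rewrite (pval pxy) /=.
apply: (reach_back pxy xr); apply/negP => /eqP xe; move: pxy; by rewrite xe pr.
Qed.

Lemma S1_bwd x y : y \in S1 -> p x = Some y -> x \in S1.
Proof.
rewrite !inE => /andP [yS yr] pxy; rewrite (reach_step pxy yr) andbT.
by apply: contraT => /pout; rewrite pxy.
Qed.

Lemma S1_sub : S1 \subset S.
Proof. by apply/subsetP => x; rewrite inE => /andP []. Qed.

Lemma rS1 : r \in S1.
Proof. by rewrite inE rS; apply/reachP; exists 0. Qed.

Lemma restr1_onS : onS S1 (restr S1 p).
Proof.
apply/onSP; split => [x|x y]; rewrite ffunE; first by move/negbTE ->.
by case: ifP => // xS1 /(S1_fwd xS1).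
Qed.

Lemma restr2_onS : onS (S :\: S1) (restr (S :\: S1) p).
Proof.
apply/onSP; split => [x|x y]; rewrite ffunE; first by move/negbTE ->.
case: ifP => //; rewrite in_setD => /andP [xn xS] pxy.
rewrite in_setD (pval pxy) andbT; apply: contra xn => yS1; exact: S1_bwd yS1 pxy.
Qed.

Lemma restr1_acyc : acyc (restr S1 p).
Proof.
apply: (acyc_agree (A := S1) pac) => [z zA|z y zA|z zA]; rewrite ?ffunE ?zA //.
  exact: S1_fwd.
by rewrite (negbTE zA).
Qed.

Lemma restr2_acyc : acyc (restr (S :\: S1) p).
Proof.
apply: (acyc_agree (A := S :\: S1) pac) => [z zA|z y zA|z zA]; rewrite ?ffunE ?zA //.
  move: zA; rewrite !in_setD => /andP [zn zS] pzy; rewrite (pval pzy) andbT.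
  apply: contra zn => yS1; exact: S1_bwd yS1 pzy.
by rewrite (negbTE zA).
Qed.

Lemma restr1_roots : roots S1 (restr S1 p) = [set r].
Proof.
apply/setP => x; rewrite in_set1 inE ffunE; apply/andP/eqP => [[xS1]|->].
  rewrite xS1 => /eqP px; move: xS1; rewrite inE => /andP [_ xr].
  exact: reach_None px xr.
by rewrite rS1 pr.
Qed.

Lemma restr2_roots : roots (S :\: S1) (restr (S :\: S1) p) = roots S p :\ r.
Proof.
apply/setP => x; rewrite !inE ffunE !inE.
case: (boolP (x \in S)) => xS; rewrite ?andbF ?andbT //=.
case: (boolP (reach p x r)) => xr /=.
  case: eqP => [->|ne] //.
  case px: (p x) => //; by move: (reach_None px xr) ne => ->.
case: (eqVneq x r) => [e|_] //=; move: xr; rewrite e => /negP; case; by apply/reachP; exists 0.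
Qed.

Lemma restr1_chl x : x \in S1 -> chl (restr S1 p) x = chl p x.
Proof.
move=> xS1; apply: chl_agree => y; rewrite ffunE; case: ifP => // yn.
case: (eqVneq (p y) (Some x)) => // pyx; by move: (S1_bwd xS1 pyx); rewrite yn.
Qed.

Lemma restr2_chl x : x \in S :\: S1 -> chl (restr (S :\: S1) p) x = chl p x.
Proof.
rewrite in_setD => /andP [xn xS]; apply: chl_agree => y; rewrite ffunE in_setD.
case: (boolP (y \in S1)) => yS1 /=.
  case: (eqVneq (p y) (Some x)) => // pyx; by move: (S1_fwd yS1 pyx) xn => ->.
case: (boolP (y \in S)) => //= yS; by rewrite pout.
Qed.

Lemma merge_restr : merge S1 (restr S1 p) (restr (S :\: S1) p) = p.
Proof.
apply/ffunP => x; rewrite !ffunE; case: ifP => xS1; first by rewrite xS1.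
rewrite in_setD xS1 /=; case: ifP => // /negbT /pout ->; done.
Qed.

End Decomp.

End Split.

Section Merge.
Variable U : finType.
Variables (S S1 : {set U}) (r : U) (p1 p2 : {ffun U -> option U}).
Hypotheses (sub : S1 \subset S) (o1 : onS S1 p1) (a1 : acyc p1)
  (R1 : roots S1 p1 = [set r]) (o2 : onS (S :\: S1) p2) (a2 : acyc p2).
Let p := merge S1 p1 p2.

Lemma p1out x : x \notin S1 -> p1 x = None.
Proof. by case/onSP: o1 => H _; apply: H. Qed.
Lemma p1val x y : p1 x = Some y -> y \in S1.
Proof. by case/onSP: o1 => _ H; apply: H. Qed.
Lemma p2out x : x \notin S :\: S1 -> p2 x = None.
Proof. by case/onSP: o2 => H _; apply: H. Qed.
Lemma p2val x y : p2 x = Some y -> y \in S :\: S1.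
Proof. by case/onSP: o2 => _ H; apply: H. Qed.
Lemma rS1' : r \in S1.
Proof. have : r \in roots S1 p1 by rewrite R1 set11. by rewrite inE => /andP []. Qed.
Lemma p1r : p1 r = None.
Proof. have : r \in roots S1 p1 by rewrite R1 set11. by rewrite inE => /andP [_ /eqP]. Qed.

Lemma merge_onS : onS S p.
Proof.
apply/onSP; split => [x xS|x y]; rewrite ffunE.
  have xS1 : x \notin S1 by apply: contra xS; apply: (subsetP sub).
  by rewrite (negbTE xS1) p2out // in_setD xS1 /= (negbTE xS).
case: ifP => _ e; first exact: (subsetP sub) (p1val e).
by move: (p2val e); rewrite in_setD => /andP [].
Qed.

Lemma merge_iter1 x k : x \in S1 -> iter k (st p) (Some x) = iter k (st p1) (Some x).
Proof.
move=> xS1; case: (iter_agree (A := S1) (p := p1) (q := p) k _ _ xS1) => //.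
  by move=> z zA; rewrite ffunE zA.
by move=> z y _; apply: p1val.
Qed.

Lemma merge_iter2 x k : x \notin S1 -> iter k (st p) (Some x) = iter k (st p2) (Some x)
  /\ inA (~: S1) (iter k (st p2) (Some x)).
Proof.
move=> xS1; apply: (@iter_agree U (~: S1) p2 p x k).
- by move=> z; rewrite inE ffunE => /negbTE ->.
- by move=> z y _ /p2val; rewrite !inE => /andP [].
- by rewrite inE.
Qed.

Lemma merge_acyc : acyc p.
Proof.
apply/acycP => x; case: (boolP (x \in S1)) => xS1.
  have := a1; move/acycP => /(_ x) [k e]; exists k; by rewrite merge_iter1.
have := a2; move/acycP => /(_ x) [k e]; exists k; by case: (merge_iter2 k xS1) => ->.
Qed.

Lemma merge_roots : roots S p = r |: roots (S :\: S1) p2.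
Proof.
apply/setP => x; rewrite !inE ffunE.
case: (boolP (x \in S1)) => xS1 /=.
  rewrite (subsetP sub _ xS1) /=.
  have := R1; move/setP/(_ x); rewrite !inE xS1 /= => ->.
  by case: (eqVneq x r) => // ->; rewrite rS1'.
case: (eqVneq x r) => [e|_]; first by move: xS1; rewrite e rS1'.
done.
Qed.

Lemma merge_nroots : #|roots S p| = (#|roots (S :\: S1) p2|).+1.
Proof.
rewrite merge_roots cardsU1; case: (boolP (r \in roots (S :\: S1) p2)) => //.
by rewrite !inE rS1'.
Qed.

Lemma merge_chl1 x : x \in S1 -> chl p x = chl p1 x.
Proof.
move=> xS1; apply: chl_agree => y; rewrite ffunE; case: ifP => // yS1.
rewrite p1out ?yS1 //; case: (eqVneq (p2 y) (Some x)) => // e.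
by move: (p2val e); rewrite in_setD xS1.
Qed.

Lemma merge_chl2 x : x \notin S1 -> chl p x = chl p2 x.
Proof.
move=> xS1; apply: chl_agree => y; rewrite ffunE; case: ifP => // yS1.
rewrite (p2out (x := y)); last by rewrite in_setD yS1.
case: (eqVneq (p1 y) (Some x)) => // e; by move: (p1val e); rewrite (negbTE xS1).
Qed.

Lemma merge_comp : comp S p r = S1.
Proof.
apply/setP => x; rewrite inE; case: (boolP (x \in S1)) => xS1.
  rewrite (subsetP sub _ xS1) /=.
  case: (reach_root o1 a1 xS1) => y; rewrite R1 inE => /eqP -> /reachP [k e].
  by apply/reachP; exists k; rewrite merge_iter1.
apply/negbTE/negP => /andP [_ /reachP [k]].
case: (merge_iter2 k xS1) => -> I e; move: I; by rewrite e /= inE rS1'.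
Qed.

Lemma restr_merge1 : restr S1 p = p1.
Proof.
apply/ffunP => x; rewrite !ffunE; case: ifP => //; first by move => ->.
by move/negbT/p1out.
Qed.

Lemma restr_merge2 : restr (S :\: S1) p = p2.
Proof.
apply/ffunP => x; rewrite !ffunE; case: ifP => [|/negbT/p2out //].
by rewrite in_setD => /andP [/negbTE ->].
Qed.

End Merge.

Lemma card_sum (T : finType) (A : {set T}) (c : pred T) :
  #|[set x in A | c x]| = \sum_(x in A) (c x : nat).
Proof.
rewrite -sum1_card big_mkcond /= [RHS]big_mkcond; apply: eq_bigr => x _.
by rewrite !inE; case: (x \in A); case: (c x).
Qed.

Lemma card_sumT (T : finType) (A : {set T}) : #|A| = \sum_x (x \in A : nat).
Proof. by rewrite -sum1_card big_mkcond. Qed.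

Section Count.
Variable U : finType.
Variables (Q P : pred nat).

Lemma sum_roots (F : {set {ffun U -> option U}}) (S : {set U}) m :
  (forall p, p \in F -> #|roots S p| = m) ->
  \sum_r #|[set p in F | r \in roots S p]| = m * #|F|.
Proof.
move=> Hm; under eq_bigr => r _ do rewrite card_sum.
rewrite exchange_big /= mulnC -sum_nat_const; apply: eq_bigr => p pF.
by rewrite -(Hm p pF) [RHS]card_sumT.
Qed.

Definition FS K S := [set p : {ffun U -> option U} | forest Q P K S p].

Lemma split_card k (S S1 : {set U}) (r : U) : S1 \subset S ->
  #|[set p in FS (pred1 k.+1) S | (r \in roots S p) && (comp S p r == S1)]| =
  #|[set p1 in FS (pred1 1) S1 | r \in roots S1 p1]| * #|FS (pred1 k) (S :\: S1)|.
Proof.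
move=> sub; rewrite -cardsX.
set D := setX _ _.
have inj : {in D &, injective (fun pr => merge S1 pr.1 pr.2)}.
  move=> [q1 q2] [q1' q2']; rewrite !inE /= => /andP [/andP [F1 _] F2] /andP [/andP [F1' _] F2'] e.
  have o1 : onS S1 q1 by case/and4P: F1.
  have o1' : onS S1 q1' by case/and4P: F1'.
  have o2 : onS (S :\: S1) q2 by case/and4P: F2.
  have o2' : onS (S :\: S1) q2' by case/and4P: F2'.
  congr (_, _).
    apply/ffunP => x; move/ffunP/(_ x): e; rewrite !ffunE; case: ifP => // /negbT xS1 _.
    by rewrite (p1out o1 xS1) (p1out o1' xS1).
  apply/ffunP => x; move/ffunP/(_ x): e; rewrite !ffunE; case: ifP => // xS1 _.
  have xS : x \notin S :\: S1 by rewrite in_setD xS1.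
  by rewrite (p2out o2 xS) (p2out o2' xS).
rewrite -(card_in_imset inj); apply: eq_card => p; rewrite inE.
apply/idP/imsetP => [|[[q1 q2]]]; last first.
  rewrite !inE /= => /andP [/andP [F1 rr] F2] ->.
  case/forestP: F1 => o1 a1 /eqP c1 C1; case/forestP: F2 => o2 a2 /eqP c2 C2.
  have R1 : roots S1 q1 = [set r].
    apply/eqP; rewrite eq_sym eqEcard sub1set inE rr c1 cards1 leqnn //.
  have rR : r \in roots S (merge S1 q1 q2) by rewrite (merge_roots q2 sub R1) setU11.
  apply/and3P; split; [|by move: rR; rewrite inE|by rewrite merge_comp].
  apply/forestP; split.
  - exact: merge_onS.
  - exact: (merge_acyc o1 a1 o2 a2).
  - by rewrite (merge_nroots q2 sub R1) c2 /=.
  move=> x xS; rewrite ffunE; case: (boolP (x \in S1)) => xS1.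
    by rewrite (merge_chl1 o1 o2 xS1); apply: C1.
  rewrite (merge_chl2 o1 o2 xS1); apply: C2; by rewrite in_setD xS1.
rewrite !inE => /andP [F /andP [rr /eqP cS1]].
case/forestP: F => o a /eqP c C.
have rR : r \in roots S p by rewrite inE.
exists (restr S1 p, restr (S :\: S1) p); last first.
  by rewrite /= -cS1 (merge_restr r o).
rewrite !inE /=; apply/andP; split; [apply/andP; split|].
- apply/forestP; split; rewrite -cS1.
  + exact: (restr1_onS o rR).
  + exact: (restr1_acyc o a rR).
  + by rewrite (restr1_roots rR) cards1.
  move=> x xS1; rewrite (restr1_chl o xS1) ffunE xS1; apply: C.
  exact: (subsetP (S1_sub S p r)).
- by move: (set11 r); rewrite -(restr1_roots rR) cS1 !inE.
apply/forestP; split; rewrite -cS1.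
- exact: (restr2_onS r o).
- exact: (restr2_acyc r o a).
- rewrite restr2_roots; move: (cardsD1 r (roots S p)); rewrite rR c add1n => -[e].
  by rewrite /= -e.
move=> x xS; rewrite (restr2_chl o rR xS) ffunE xS; apply: C.
by move: xS; rewrite in_setD => /andP [].
Qed.

Lemma split_sum k (S : {set U}) :
  k.+1 * H Q P (pred1 k.+1) S =
  \sum_(S1 : {set U} | S1 \subset S) H Q P (pred1 1) S1 * H Q P (pred1 k) (S :\: S1).
Proof.
have E1 : forall S1 : {set U}, H Q P (pred1 1) S1 =
    \sum_r #|[set p1 in FS (pred1 1) S1 | r \in roots S1 p1]|.
  move=> S1; rewrite (@sum_roots _ S1 1) ?mul1n // => p.
  by rewrite inE => /forestP [_ _ /eqP -> _].
under eq_bigr => S1 _ do rewrite E1 big_distrl /=.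
under eq_bigr => S1 sub do under eq_bigr => r _ do rewrite -(split_card k r sub).
rewrite exchange_big /= -(@sum_roots (FS (pred1 k.+1) S) S k.+1); last first.
  by move=> p; rewrite inE => /forestP [_ _ /eqP -> _].
apply: eq_bigr => r _.
rewrite card_sum.
rewrite (eq_bigr (fun S1 => \sum_(p in FS (pred1 k.+1) S)
   ((r \in roots S p) && (comp S p r == S1) : nat))); last by move=> S1 _; rewrite card_sum.
rewrite exchange_big /=; apply: eq_bigr => p _.
rewrite (bigD1 (comp S p r)) /= ?S1_sub // eqxx andbT big1 ?addn0 //.
by move=> S1 /andP [_ ne]; rewrite eq_sym (negbTE ne) andbF.
Qed.

End Count.

Section Cut.
Variable U : finType.
Implicit Types (p q : {ffun U -> option U}) (S : {set U}).

Lemma acyc_sub p q : (forall x, q x = p x \/ q x = None) -> acyc p -> acyc q.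
Proof.
move=> Hq /acycP Hp; apply/acycP => x; case: (Hp x) => k e; exists k.
suff : iter k (st q) (Some x) = iter k (st p) (Some x) \/ iter k (st q) (Some x) = None.
  by rewrite e; case.
elim: k {e} => [|k [IH|IH]] /=; [by left | | by right; rewrite IH].
rewrite IH; case: (iter k (st p) (Some x)) => [z|] /=; last by left.
exact: Hq.
Qed.

Definition cut p r : {ffun U -> option U} := [ffun x => if p x == Some r then None else p x].
Definition attach S r q : {ffun U -> option U} :=
  [ffun x => if (x \in S) && (x != r) && (q x == None) then Some r else q x].

Variables (P : pred nat).
Let Q' := predm1 P.

Section CutTree.
Variables (S : {set U}) (r : U) (p : {ffun U -> option U}).
Hypotheses (F : forest Q' P (pred1 1) S p) (rR : r \in roots S p).

Lemma F_onS : onS S p. Proof. by case/forestP: F. Qed.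
Lemma F_acyc : acyc p. Proof. by case/forestP: F. Qed.
Lemma F_roots : roots S p = [set r].
Proof.
case/forestP: F => _ _ /eqP c _; apply/eqP; rewrite eq_sym eqEcard sub1set rR c cards1 //.
Qed.
Lemma F_pr : p r = None. Proof. by move: rR; rewrite inE => /andP [_ /eqP]. Qed.
Lemma F_rS : r \in S. Proof. by move: rR; rewrite inE => /andP []. Qed.
Lemma F_nonroot x : x \in S -> x != r -> p x != None.
Proof.
move=> xS xr; apply/negP => /eqP px; have : x \in roots S p by rewrite inE xS px.
by rewrite F_roots inE (negbTE xr).
Qed.

Lemma cut_onS : onS (S :\ r) (cut p r).
Proof.
case/onSP: F_onS => H1 H2; apply/onSP; split => [x|x y]; rewrite ffunE.
  move=> xn; case: (eqVneq x r) => [->|xr]; first by rewrite F_pr.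
  have xS : x \notin S by move: xn; rewrite in_setD1 xr.
  by rewrite (H1 _ xS).
case: ifP => // ne e; rewrite in_setD1 (H2 _ _ e) andbT; apply/eqP => yr.
by move: ne; rewrite e yr eqxx.
Qed.

Lemma cut_acyc : acyc (cut p r).
Proof.
apply: (acyc_sub _ F_acyc) => x; rewrite ffunE; case: ifP => _; by [right|left].
Qed.

Lemma cut_roots : roots (S :\ r) (cut p r) = [set y | p y == Some r].
Proof.
case/onSP: F_onS => H1 H2.
apply/setP => x; rewrite !inE ffunE.
case: (eqVneq (p x) (Some r)) => [e|ne] /=.
  rewrite andbT; apply/andP; split; last by apply/contraT => /H1; rewrite e.
  by apply/eqP => xr; move: e; rewrite xr F_pr.
case: (eqVneq x r) => //= xr; case: (boolP (x \in S)) => //= xS.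
by rewrite (negbTE (F_nonroot xS xr)).
Qed.

Lemma cut_chl x : x != r -> chl (cut p r) x = chl p x.
Proof.
move=> xr; apply: chl_agree => y; rewrite ffunE.
case: (eqVneq (p y) (Some r)) => [->|//]; by rewrite !eqE /= eq_sym (negbTE xr).
Qed.

Lemma cut_forest : forest P P Q' (S :\ r) (cut p r).
Proof.
case/forestP: F => _ _ _ C.
apply/forestP; split.
- exact: cut_onS.
- exact: cut_acyc.
- rewrite cut_roots; have := C r F_rS; by rewrite F_pr eqxx.
move=> x; rewrite in_setD1 => /andP [xr xS]; rewrite cut_chl //.
have := C x xS; rewrite (negbTE (F_nonroot xS xr)); by case: ifP.
Qed.

Lemma attach_cut : attach S r (cut p r) = p.
Proof.
apply/ffunP => x; rewrite !ffunE.
case: (eqVneq (p x) (Some r)) => [e|ne] /=.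
  case/onSP: F_onS => H1 _.
  have xS : x \in S by apply: contraT => /H1; rewrite e.
  have xr : x != r by apply/eqP => xr; move: e; rewrite xr F_pr.
  by rewrite xS xr e.
case: (boolP (x \in S)) => //= xS; case: (eqVneq x r) => //= xr.
by rewrite (negbTE (F_nonroot xS xr)).
Qed.

End CutTree.

Section AttachForest.
Variables (S : {set U}) (r : U) (q : {ffun U -> option U}).
Hypotheses (rS : r \in S) (F : forest P P Q' (S :\ r) q).

Let o : onS (S :\ r) q. Proof. by case/forestP: F. Qed.
Lemma qout x : x \notin S :\ r -> q x = None.
Proof. by case/onSP: o => H _; apply: H. Qed.
Lemma qval x y : q x = Some y -> y \in S :\ r.
Proof. by case/onSP: o => _ H; apply: H. Qed.
Lemma qr : q r = None. Proof. by apply: qout; rewrite in_setD1 eqxx. Qed.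

Let a := attach S r q.

Lemma attach_r : a r = None.
Proof. by rewrite ffunE eqxx andbF /= qr. Qed.

Lemma attach_val x : a x = q x \/ (q x = None /\ a x = Some r).
Proof. rewrite ffunE; case: ifP => [/andP [_ /eqP e]|_]; by [right|left]. Qed.

Lemma attach_onS : onS S a.
Proof.
apply/onSP; split => [x xS|x y]; rewrite ffunE.
  rewrite (negbTE xS) /= qout // in_setD1 (negbTE xS) andbF //.
case: ifP => [_ [<-] //|_ /qval]; by rewrite in_setD1 => /andP [].
Qed.

Lemma attach_acyc : acyc a.
Proof.
case/forestP: F => _ /acycP Hq _ _; apply/acycP => x.
case: (Hq x) => j e; exists j.+1; elim: j x e => [|j IH] x //.
move=> e; rewrite iterSr in e; rewrite iterSr.
have -> : st a (Some x) = a x by [].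
have ex' : st q (Some x) = q x by [].
rewrite ex' in e.
case: (attach_val x) => [->|[qx ->]].
  case ex: (q x) e => [y|] e; first by apply: IH.
  by rewrite iter_st_None.
by rewrite iterSr; have -> : st a (Some r) = a r by []; rewrite attach_r iter_st_None.
Qed.

Lemma attach_roots : roots S a = [set r].
Proof.
apply/setP => x; rewrite !inE ffunE.
case: (eqVneq x r) => [->|xr] /=; first by rewrite rS /= qr eqxx.
case: (boolP (x \in S)) => //= xS; by case: (q x).
Qed.

Lemma attach_chl_r : chl a r = #|roots (S :\ r) q|.
Proof.
apply: eq_card => y; rewrite !inE ffunE.
case: ifP => [/andP [/andP [yS yr] ->]|nc]; first by rewrite eqxx yr yS.
have -> : (q y == Some r) = false.
  apply/negbTE/negP => /eqP /qval; by rewrite in_setD1 eqxx.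
by move: nc; case: (y \in S); case: (y != r); case: (q y == None).
Qed.

Lemma attach_chl x : x != r -> chl a x = chl q x.
Proof.
move=> xr; apply: chl_agree => y; rewrite ffunE; case: ifP => [/andP [_ /eqP ->]|//].
by rewrite !eqE /= eq_sym (negbTE xr).
Qed.

Lemma cut_attach : cut a r = q.
Proof.
apply/ffunP => x; rewrite !ffunE.
case c: ((x \in S) && (x != r) && (q x == None)).
  by move: c => /andP [_ /eqP ->]; rewrite eqxx.
case: (eqVneq (q x) (Some r)) => [e|//]; move: (qval e); by rewrite in_setD1 eqxx.
Qed.

Lemma attach_forest : forest Q' P (pred1 1) S a.
Proof.
case/forestP: F => _ _ K C.
apply/forestP; split.
- exact: attach_onS.
- exact: attach_acyc.
- by rewrite attach_roots cards1.
move=> x xS; case: (eqVneq x r) => [->|xr].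
  by rewrite attach_r eqxx attach_chl_r.
rewrite attach_chl //.
have xS' : x \in S :\ r by rewrite in_setD1 xr.
have := C x xS'; rewrite ffunE xS xr /=.
by case: (q x) => //=; case: ifP.
Qed.

End AttachForest.

Lemma tree_root_card (S : {set U}) r : r \in S ->
  #|[set p in FS Q' P (pred1 1) S | r \in roots S p]| = H P P Q' (S :\ r).
Proof.
move=> rS.
have inj : {in [set p in FS Q' P (pred1 1) S | r \in roots S p] &, injective (cut ^~ r)}.
  move=> p1 p2; rewrite !inE => /andP [F1 R1] /andP [F2 R2] e.
  have R1' : r \in roots S p1 by rewrite inE.
  have R2' : r \in roots S p2 by rewrite inE.
  by rewrite -(attach_cut F1 R1') e attach_cut.
rewrite -(card_in_imset inj); apply: eq_card => q; rewrite inE.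
apply/imsetP/idP => [[p]|Fq].
  rewrite !inE => /andP [F1 R1] ->; apply: cut_forest => //; by rewrite inE.
exists (attach S r q); last by rewrite cut_attach.
rewrite !inE attach_forest //=.
have : r \in roots S (attach S r q) by rewrite attach_roots // set11.
by rewrite inE.
Qed.

Lemma tree_sum (S : {set U}) :
  H Q' P (pred1 1) S = \sum_(r in S) H P P Q' (S :\ r).
Proof.
rewrite -[H _ _ _ _]mul1n -(@sum_roots _ (FS Q' P (pred1 1) S) S 1); last first.
  by move=> p; rewrite inE => /forestP [_ _ /eqP -> _].
rewrite [RHS]big_mkcond /=; apply: eq_bigr => r _; case: ifP => [rS|rS].
  exact: tree_root_card.
apply/eqP; rewrite cards_eq0; apply/eqP/setP => p; rewrite !inE.
apply/negbTE; rewrite negb_and; apply/orP; right; by rewrite rS.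
Qed.

End Cut.

Definition hn (Q P K : pred nat) n := H Q P K [set: 'I_n].

Lemma H_hn (U : finType) (Q P K : pred nat) (S : {set U}) : H Q P K S = hn Q P K #|S|.
Proof. exact: H_card. Qed.

Lemma sum_by_card n (f : nat -> nat) :
  \sum_(S1 : {set 'I_n}) f #|S1| = \sum_(i < n.+1) 'C(n, i) * f i.
Proof.
have lt : forall S1 : {set 'I_n}, #|S1| < n.+1.
  by move=> S1; rewrite ltnS; apply: leq_trans (max_card _) _; rewrite card_ord.
rewrite (partition_big (fun S1 => Ordinal (lt S1)) xpredT) //=.
apply: eq_bigr => i _.
rewrite (eq_bigr (fun _ => f i)); last by move=> S1 /eqP <-.
rewrite (eq_bigl (fun S1 => S1 \in [set S : {set 'I_n} | #|S| == i])); last first.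
  by move=> S1; rewrite inE -val_eqE.
by rewrite sum_nat_const card_draws card_ord.
Qed.

Section Nat.
Variables (Q P : pred nat).

Lemma split_nat k n :
  k.+1 * hn Q P (pred1 k.+1) n =
  \sum_(i < n.+1) 'C(n, i) * (hn Q P (pred1 1) i * hn Q P (pred1 k) (n - i)).
Proof.
rewrite /hn split_sum.
rewrite (eq_bigl xpredT); last by move=> S1; rewrite subsetT.
rewrite -(@sum_by_card n (fun i => hn Q P (pred1 1) i * hn Q P (pred1 k) (n - i))).
apply: eq_bigr => S1 _; rewrite !H_hn; congr (_ * hn _ _ _ _).
by rewrite cardsD setTI cardsT card_ord.
Qed.

Lemma H0 (U : finType) (K : pred nat) : H Q P K (set0 : {set U}) = K 0.
Proof.
have F0 : forest Q P K set0 [ffun _ : U => None] = K 0.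
  rewrite /forest; have -> : roots set0 [ffun _ : U => None] = set0.
    by apply/setP => x; rewrite !inE.
  rewrite cards0.
  have o : onS (set0 : {set U}) [ffun _ : U => None].
    by apply/onSP; split => [x|x y]; rewrite ffunE.
  have a : acyc [ffun _ : U => None].
    by apply/acycP => x; exists 1; rewrite /= /st /= ffunE.
  set c := [forall x in _, _].
  have -> : c by apply/forall_inP => x; rewrite inE.
  by rewrite o a; case: (K 0).
case K0 : (K 0); rewrite /H /=.
  rewrite -(cards1 ([ffun _ : U => None] : {ffun U -> option U})); apply: eq_card => p; rewrite !inE.
  apply/idP/eqP => [/forestP [/onSP [H1 _] _ _ _]|->]; last by rewrite F0 K0.
  by apply/ffunP => x; rewrite ffunE H1 // inE.
apply/eqP; rewrite cards_eq0; apply/eqP/setP => p; rewrite !inE.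
apply/negbTE/negP => /forestP [/onSP [H1 _] _ Kc _].
have : roots set0 p = set0 by apply/setP => x; rewrite !inE.
by move=> e; move: Kc; rewrite e cards0 K0.
Qed.

Lemma hn0 n : hn Q P (pred1 0) n = (n == 0%N).
Proof.
case: n => [|n].
  rewrite /hn (_ : [set: 'I_0] = set0) ?H0 //; apply/setP => [[]] //.
apply/eqP; rewrite /hn /H cards_eq0; apply/eqP/setP => p; rewrite !inE.
apply/negbTE/negP => /forestP [o a c _].
have xS : (ord0 : 'I_n.+1) \in [set: 'I_n.+1] by rewrite inE.
case: (reach_root o a xS) => y yr _.
by move: c; rewrite /= cards_eq0 => /eqP e; move: yr; rewrite e inE.
Qed.

Lemma hn_big k n : n < k -> hn Q P (pred1 k) n = 0%N.
Proof.
move=> lt; apply/eqP; rewrite /hn /H cards_eq0; apply/eqP/setP => p; rewrite !inE.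
apply/negbTE/negP => /forestP [_ _ /eqP c _].
by move: (nroots_le [set: 'I_n] p); rewrite c cardsT card_ord leqNgt lt.
Qed.

Lemma hn_K (K : pred nat) n :
  hn Q P K n = \sum_(j < n.+1 | K j) hn Q P (pred1 (j : nat)) n.
Proof.
rewrite /hn /H.
have lt : forall p : {ffun 'I_n -> option 'I_n}, #|roots [set: 'I_n] p| < n.+1.
  by move=> p; rewrite ltnS; apply: leq_trans (nroots_le _ _) _; rewrite cardsT card_ord.
rewrite card_sumT (partition_big (fun p => Ordinal (lt p)) xpredT) //=.
rewrite [RHS]big_mkcond; apply: eq_bigr => j _.
rewrite card_sumT; case: ifP => Kj.
  rewrite big_mkcond /=; apply: eq_bigr => p _; rewrite -val_eqE /= !inE /forest.
  case: (eqVneq #|roots [set: 'I_n] p| j) => [->|ne]; first by rewrite Kj /= eqxx.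
  by rewrite /= (negbTE ne) /= !andbF.
apply: big1 => p; rewrite -val_eqE /= => /eqP e; rewrite !inE /forest e Kj.
by rewrite !andbF.
Qed.

End Nat.

Lemma tree_nat (P : pred nat) n :
  hn (predm1 P) P (pred1 1) n.+1 = n.+1 * hn P P (predm1 P) n.
Proof.
rewrite /hn tree_sum.
rewrite (eq_bigr (fun _ => hn P P (predm1 P) n)); last first.
  move=> r _; rewrite H_hn; congr hn.
  by move: (cardsD1 r [set: 'I_n.+1]); rewrite in_setT cardsT card_ord add1n => -[].
by rewrite sum_nat_const cardsT card_ord.
Qed.

Lemma tree_count_hn (P : pred nat) n : tree_count P n = hn P P (pred1 1) n.
Proof.
rewrite /tree_count /hn /H; apply: eq_card => p; rewrite !inE /forest /is_rooted_tree.
have -> : onS [set: 'I_n] p.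
  by apply/onSP; split => [x|x y _]; rewrite inE.
have -> : roots [set: 'I_n] p = [set x | p x == None].
  by apply/setP => x; rewrite !inE.
have -> : [forall x in [set: 'I_n], if p x == None then P (chl p x) else P (chl p x)]
   = [forall x, P (nchildren p x)].
  apply/forall_inP/forallP => H x; [have := H x; rewrite inE => /(_ isT)|
    rewrite (H x)]; by case: ifP.
rewrite /acyc /st card_ord /=.
by case: (_ == 1)%N; case: [forall x, P (nchildren p x)]; rewrite ?andbF ?andbT.
Qed.

Section Fun.
Variable n : nat.
Local Notation U := 'I_n.
Implicit Types (f : {ffun U -> U}) (q : {ffun U -> option U}).

Definition cycl f x := [exists j : 'I_n, iter j.+1 f x == x].

Lemma cyclP f x : reflect (exists j, iter j.+1 f x = x) (cycl f x).
Proof.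
apply: (iffP existsP) => [[j /eqP e]|[j]]; first by exists j.
move=> e; have e2 : iter j (fun_of_fin f) (f x) = x by rewrite -iterSr.
case: (iter_short e2) => k lt e3; rewrite card_ord in lt.
by exists (Ordinal lt); apply/eqP; rewrite /= -[in RHS]e3; apply: iterSr.
Qed.

Lemma iter_period f x k m : iter k f x = x -> iter (k * m) f x = x.
Proof.
move=> e; elim: m => [|m IH]; first by rewrite muln0.
by rewrite mulnS iterD IH e.
Qed.

Lemma cycl_f f x : cycl f x -> cycl f (f x).
Proof.
case/cyclP => j e; apply/cyclP; exists j; by rewrite -iterSr iterS e.
Qed.

Lemma cycl_iter f x k : cycl f x -> cycl f (iter k f x).
Proof. by move=> c; elim: k => //= k IH; exact: cycl_f. Qed.

Lemma cycl_inj f x y : cycl f x -> cycl f y -> f x = f y -> x = y.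
Proof.
case/cyclP => a ea /cyclP [b eb] e.
have ex := iter_period b.+1 ea; have ey := iter_period a.+1 eb.
rewrite mulnC in ey.
rewrite -ex -ey mulSn addSn !iterSr e //.
Qed.

Lemma cycl_reach f x : cycl f (iter n f x).
Proof.
pose g (i : 'I_n.+1) := iter i f x.
have : ~~ injectiveb g.
  apply/negP => /injectiveP inj; move: (leq_card _ inj).
  by rewrite !card_ord ltnn.
case/injectivePn => i [j neq eqg].
wlog lij : i j neq eqg / i < j.
  move=> W; case: (ltngtP i j) => [l|l|e]; first exact: W neq eqg l.
    by apply: (W j i); rewrite // eq_sym.
  by move/eqP: neq; case; apply: val_inj.
have jn : j <= n by rewrite -ltnS ltn_ord.
have c : cycl f (iter i f x).
  apply/cyclP; exists (j - i).-1; rewrite prednK ?subn_gt0 // -iterD subnK //.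
  exact: ltnW.
have e : iter n f x = iter (n - i) f (iter i f x).
  by rewrite -iterD subnK // (leq_trans (ltnW lij)).
by rewrite e; apply: cycl_iter.
Qed.

Definition Phi f : {ffun U -> option U} := [ffun x => if cycl f x then None else Some (f x)].

Lemma Phi_iter f k x : cycl f (iter k f x) -> iter k.+1 (st (Phi f)) (Some x) = None.
Proof.
elim: k x => [|k IH] x c.
  by rewrite /= /st /= ffunE c.
rewrite iterSr [X in X (Some x)]/st /= ffunE.
case: ifP => _; first by rewrite iter_st_None.
apply: IH; by rewrite -iterSr.
Qed.

Lemma Phi_acyc f : acyc (Phi f).
Proof. apply/acycP => x; exists n.+1; apply: Phi_iter; exact: cycl_reach. Qed.

Lemma Phi_roots f : roots [set: U] (Phi f) = [set x | cycl f x].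
Proof. by apply/setP => x; rewrite !inE ffunE; case: ifP. Qed.

Lemma Phi_onS f : onS [set: U] (Phi f).
Proof. by apply/onSP; split => [x|x y _]; rewrite inE. Qed.

Definition fib f x := #|[set y | f y == x]|.

Lemma fib_Phi f x : fib f x = chl (Phi f) x + cycl f x.
Proof.
rewrite /fib -(cardsID [set y | cycl f y]) addnC; congr (_ + _).
  apply: eq_card => y; rewrite !inE ffunE; by case: (cycl f y).
case: (boolP (cycl f x)) => cx /=.
  have [j ej] := cyclP _ _ cx.
  rewrite -(cards1 (iter j f x)); apply: eq_card => y; rewrite !inE.
  apply/andP/eqP => [[/eqP fy cy]|->]; last first.
    by split; [rewrite -iterS ej | exact: (cycl_iter j cx)].
  apply: (@cycl_inj f) => //; first exact: (cycl_iter j cx).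
  by rewrite -iterS ej.
apply/eqP; rewrite cards_eq0; apply/eqP/setP => y; rewrite !inE.
apply/negbTE/negP => /andP [/eqP fy cy]; move: cx; by rewrite -fy cycl_f.
Qed.

Variable P : pred nat.
Let Q' := predm1 P.

Lemma Phi_forest f : fibresP P f -> forest Q' P predT [set: U] (Phi f).
Proof.
move=> /forallP Fb; apply/forestP; split => //.
- exact: Phi_onS.
- exact: Phi_acyc.
move=> x _; have := Fb x; rewrite -/(fib f x) fib_Phi ffunE.
case: (cycl f x) => /=; by rewrite ?addn1 ?addn0.
Qed.

Section Rev.
Variable q : {ffun U -> option U}.
Hypothesis Fq : forest Q' P predT [set: U] q.
Let R := roots [set: U] q.

Definition fs (s : {perm U}) : {ffun U -> U} := [ffun x => if q x is Some y then y else s x].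

Lemma inR x : (x \in R) = (q x == None).
Proof. by rewrite !inE. Qed.

Variable s : {perm U}.
Hypothesis sR : perm_on R s.

Lemma fs_R x : x \in R -> fs s x = s x.
Proof. by rewrite inR ffunE => /eqP ->. Qed.

Lemma fs_iterR x k : x \in R -> iter k (fs s) x = (s ^+ k)%g x /\ iter k (fs s) x \in R.
Proof.
move=> xR; rewrite permX; elim: k => [|k [IH1 IH2]]; first by split.
rewrite !iterS IH1 fs_R -?IH1 //; split => //.
by rewrite (perm_closed _ sR).
Qed.

Lemma fs_cyclR x : x \in R -> cycl (fs s) x.
Proof.
move=> xR; apply/cyclP; exists (#[s]%g).-1; rewrite prednK ?order_gt0 //.
by case: (fs_iterR #[s]%g xR) => -> _; rewrite expg_order perm1.
Qed.

Lemma fs_stayR x k m : iter k (fs s) x \in R -> iter (m + k) (fs s) x \in R.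
Proof. by move=> h; rewrite iterD; case: (fs_iterR m h). Qed.

Lemma fs_track x k : x \in [set: U] ->
  iter k (fs s) x \in R \/ Some (iter k (fs s) x) = iter k (st q) (Some x).
Proof.
move=> _; elim: k => [|k [IH|IH]] /=; first by right.
  by left; rewrite fs_R // (perm_closed _ sR).
case: (boolP (iter k (fs s) x \in R)) => h; first by left; rewrite fs_R // (perm_closed _ sR).
right; rewrite -IH /st /= ffunE; move: h; rewrite inR; by case: (q _).
Qed.

Lemma fs_ncycl x : x \notin R -> ~~ cycl (fs s) x.
Proof.
move=> xR; apply/negP => /cyclP [j ej].
have Hn : iter n (fs s) x \in R.
  case: (fs_track n (in_setT x)) => // e.
  case/forestP: Fq => _ A _ _; move/forallP: A => /(_ x) /eqP; rewrite card_ord -e //.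
have := fs_stayR (j.+1 * n - n) Hn; rewrite subnK; last by rewrite mulSn leq_addr.
by rewrite iter_period // (negbTE xR).
Qed.

Lemma fs_cycl x : cycl (fs s) x = (x \in R).
Proof.
case: (boolP (x \in R)) => xR; first exact: fs_cyclR.
exact/negbTE/fs_ncycl.
Qed.

Lemma fib_fs x : fib (fs s) x = chl q x + (x \in R).
Proof.
rewrite /fib -(cardsID R) addnC; congr (_ + _).
  apply: eq_card => y; rewrite !inE ffunE.
  by case: (q y) => [z|] //=; rewrite andbT.
case: (boolP (x \in R)) => xR /=.
  rewrite -(cards1 ((s^-1)%g x)); apply: eq_card => y; rewrite !inE.
  apply/andP/eqP => [[/eqP fy yR]|->].
    rewrite -fy fs_R; [by rewrite (permK s y) | by rewrite inR; case/andP: yR].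
  have yR : (s^-1)%g x \in R by rewrite (perm_closed _ (perm_onV sR)).
  by rewrite fs_R // permKV eqxx; move: yR; rewrite !inE.
apply/eqP; rewrite cards_eq0; apply/eqP/setP => y; rewrite !inE.
apply/negbTE/negP => /andP [/eqP fy yR].
have yR' : y \in R by rewrite !inE.
move: xR; by rewrite -fy fs_R // (perm_closed _ sR) yR'.
Qed.

Lemma Phi_fs : Phi (fs s) = q.
Proof.
apply/ffunP => x; rewrite !ffunE fs_cycl inR.
by case: (q x).
Qed.

Lemma fs_fibres : fibresP P (fs s).
Proof.
apply/forallP => x; rewrite -/(fib _ x) fib_fs.
case/forestP: Fq => _ _ _ /(_ x (in_setT x)); rewrite -inR.
by case: (x \in R) => /=; rewrite ?addn1 ?addn0.
Qed.

End Rev.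

Lemma fs_inj q : {in [set s : {perm U} | perm_on (roots [set: U] q) s] &, injective (fs q)}.
Proof.
move=> s1 s2; rewrite !inE => p1 p2 e; apply/permP => x.
case: (boolP (x \in roots [set: U] q)) => xR.
  move/ffunP/(_ x): e; by rewrite !ffunE; move: xR; rewrite !inE => /eqP ->.
by rewrite (out_perm p1 xR) (out_perm p2 xR).
Qed.

Lemma fs_surj f : fibresP P f ->
  exists2 s : {perm U}, perm_on (roots [set: U] (Phi f)) s & fs (Phi f) s = f.
Proof.
move=> Fb.
pose g x := if cycl f x then f x else x.
have ginj : injective g.
  move=> x y; rewrite /g.
  case: (boolP (cycl f x)) => cx; case: (boolP (cycl f y)) => cy.
  - exact: cycl_inj.
  - by move=> e; move: cy; rewrite -e cycl_f.
  - by move=> e; move: cx; rewrite e cycl_f.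
  - done.
exists (perm ginj).
  apply/subsetP => x; rewrite inE permE /g Phi_roots inE.
  by case: (cycl f x); rewrite ?eqxx.
apply/ffunP => x; rewrite !ffunE permE /g.
by case: (cycl f x).
Qed.

End Fun.

Import GRing.Theory.

Lemma sum_roots_card (V : nmodType) n (Q P : pred nat) (c : nat -> V) :
  (\sum_(q : {ffun 'I_n -> option 'I_n} | forest Q P predT [set: 'I_n] q) c #|roots [set: 'I_n] q|)%R
  = (\sum_(k < n.+1) c k *+ hn Q P (pred1 (k : nat)) n)%R.
Proof.
have lt : forall p : {ffun 'I_n -> option 'I_n}, #|roots [set: 'I_n] p| < n.+1.
  by move=> p; rewrite ltnS; apply: leq_trans (nroots_le _ _) _; rewrite cardsT card_ord.
rewrite (partition_big (fun p => Ordinal (lt p)) xpredT) //=.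
apply: eq_bigr => k _.
rewrite (eq_bigr (fun _ => c k)); last by move=> q /andP [_ /eqP <-].
rewrite (eq_bigl (fun q => q \in [set q | forest Q P (pred1 (k : nat)) [set: 'I_n] q])).
  by rewrite sumr_const.
move=> q; rewrite !inE -val_eqE /= /forest.
case: (eqVneq #|roots [set: 'I_n] q| k) => [->|ne] /=; first by rewrite eqxx andbT.
by rewrite (negbTE ne) /= !andbF.
Qed.

Lemma cyc_Phi n (f : {ffun 'I_n -> 'I_n}) : cyc f = #|roots [set: 'I_n] (Phi f)|.
Proof. by rewrite Phi_roots. Qed.

Lemma sum_cyc (R : nzRingType) n (P : pred nat) :
  (\sum_(f : {ffun 'I_n -> 'I_n} | fibresP P f) ('X^(cyc f) : {poly R}) =
  \sum_(k < n.+1) 'X^k *+ (k`! * hn (predm1 P) P (pred1 (k : nat)) n))%R.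
Proof.
under eq_bigr => f _ do rewrite cyc_Phi.
rewrite (partition_big (@Phi n) (fun q => forest (predm1 P) P predT [set: 'I_n] q));
  last exact: Phi_forest.
rewrite /=.
rewrite [RHS](eq_bigr (fun k : 'I_n.+1 =>
  ('X^k *+ k`!) *+ hn (predm1 P) P (pred1 (k:nat)) n)%R); last by move=> k _; rewrite mulrnA.
rewrite -(@sum_roots_card _ n (predm1 P) P (fun k => 'X^k *+ k`!)%R).
apply: eq_bigr => q Fq.
rewrite (eq_bigr (fun _ => 'X^#|roots [set: 'I_n] q|)%R); last by move=> f /andP [_ /eqP ->].
set A := [set f : {ffun 'I_n -> 'I_n} | fibresP P f && (Phi f == q)].
rewrite (eq_bigl (fun f => f \in A)); last by move=> f; rewrite inE.
rewrite sumr_const; congr (GRing.natmul _ _).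
rewrite -card_perm.
have -> : A = (fs q) @: [set s : {perm 'I_n} | perm_on (roots [set: 'I_n] q) s].
  apply/setP => f; rewrite inE; apply/andP/imsetP => [[Fb /eqP e]|[s]].
    case: (fs_surj Fb) => s sR fe; exists s; rewrite -?e ?inE //.
  rewrite inE => sR ->; split; [exact: fs_fibres | by rewrite (Phi_fs Fq sR)].
rewrite card_in_imset; last exact: fs_inj.
by apply: eq_card => s; rewrite inE.
Qed.

From mathcomp Require Import ring.
Import GRing.Theory.
Local Open Scope ring_scope.

Section Expo.
Variables (R : comUnitRingType) (hQ : forall n : nat, (n.+1)%:R \is a @GRing.unit R).

Lemma fact_unit m : ((m`!)%:R : R) \is a GRing.unit.
Proof.
elim: m => [|m IH]; first by rewrite fact0 unitr1.
by rewrite factS natrM unitrM hQ IH.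
Qed.

Lemma frac_mul (x y u v : R) : u \is a GRing.unit -> v \is a GRing.unit ->
  (x / u * (y / v) = x * y / (u * v))%R.
Proof. move=> uu vu; rewrite invrM //; ring. Qed.

Lemma frac_cancel (c x w : R) : c \is a GRing.unit -> w \is a GRing.unit ->
  ((c * x) / (c * w) = x / w)%R.
Proof.
move=> cu wu; rewrite invrM //.
have -> : (c * x * (w^-1 * c^-1) = (c * c^-1) * (x * w^-1))%R by ring.
by rewrite mulrV // mul1r.
Qed.

Variables (Q P : pred nat).

Lemma expo (T : nat -> R)
  (HT : forall m, T m = ((hn Q P (pred1 1) m)%:R / (m`!)%:R)%R) k m :
  fps_pow T k m = ((k`! * hn Q P (pred1 k) m)%:R / (m`!)%:R)%R.
Proof.
elim: k m => [|k IH] m.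
  rewrite /fps_pow /= /fps_one hn0 fact0 mul1n.
  case: m => [|m] /=; first by rewrite fact0 invr1 mulr1.
  by rewrite mul0r.
have -> : fps_pow T k.+1 m = (\sum_(i < m.+1) T i * fps_pow T k (m - i))%R by [].
rewrite factS -mulnA (mulnA k.+1) (mulnC k.+1) -mulnA split_nat big_distrr /=.
rewrite natr_sum mulr_suml; apply: eq_bigr => i _.
have le : (i <= m)%N by rewrite -ltnS ltn_ord.
rewrite HT IH -(bin_fact le).
have -> : (k`! * ('C(m, i) * (hn Q P (pred1 1) i * hn Q P (pred1 k) (m - i))) =
   'C(m, i) * (hn Q P (pred1 1) i * (k`! * hn Q P (pred1 k) (m - i))))%N.
  by rewrite mulnCA (mulnCA k`!).
have ab := fact_unit (m - i); have aa := fact_unit i.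
have cu : (('C(m, i))%:R : R) \is a GRing.unit.
  by move: (fact_unit m); rewrite -(bin_fact le) natrM unitrM => /andP [].
rewrite (natrM _ 'C(m, i) (i`! * (m - i)`!)) (natrM _ 'C(m, i)) frac_cancel //;
  last by rewrite natrM unitrM aa ab.
by rewrite !natrM -frac_mul // mulrA.
Qed.

End Expo.

From mathcomp Require Import ring.
From Stdlib Require Import FunctionalExtensionality.
Import GRing.Theory.
Local Open Scope ring_scope.

Section Main.
Variables (R : comUnitRingType) (hQ : forall n : nat, (n.+1)%:R \is a @GRing.unit R).
Variable P : pred nat.

Let X (m : nat) : R := (hn (predm1 P) P (pred1 1) m)%:R / (m`!)%:R.
Let c k m := fps_pow X k m.
Let A := fps_comp (expP R (predm1 P)) (TP R P).

Lemma c_val k m : c k m = (k`! * hn (predm1 P) P (pred1 k) m)%:R / (m`!)%:R.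
Proof. by apply: expo. Qed.

Lemma TP_val m : TP R P m = (hn P P (pred1 1) m)%:R / (m`!)%:R.
Proof. by rewrite /TP tree_count_hn. Qed.

Lemma A_val m : A m = (hn P P (predm1 P) m)%:R / (m`!)%:R.
Proof.
rewrite /A /fps_comp hn_K natr_sum mulr_suml [RHS]big_mkcond /=.
apply: eq_bigr => j _.
rewrite (expo hQ TP_val) /expP /predm1.
case: ifP => _; last by rewrite mul0r.
by rewrite natrM !mulrA mulVr ?mul1r // fact_unit.
Qed.

Lemma X_succ m : X m.+1 = A m.
Proof.
rewrite /X A_val tree_nat factS !natrM frac_cancel //.
by rewrite fact_unit.
Qed.

Lemma X0 : X 0 = 0.
Proof. by rewrite /X hn_big // mul0r. Qed.

Lemma c_big k m : (m < k)%N -> c k m = 0.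
Proof. by move=> lt; rewrite c_val hn_big // muln0 mul0r. Qed.

Lemma c0 m : c 0 m = (m == 0%N)%:R.
Proof. by rewrite /c /fps_pow /= /fps_one; case: (m == 0%N). Qed.

Lemma FCYC_val n : FCYC R P n = \sum_(k < n.+1) c k n *: 'X^k.
Proof.
rewrite /FCYC sum_cyc scaler_sumr; apply: eq_bigr => k _.
by rewrite -scaler_nat scalerA c_val mulrC.
Qed.

Lemma cstep k m : c k.+1 m.+1 = \sum_(i < m.+1) A (m - i) * c k i.
Proof.
have -> : c k.+1 m.+1 = \sum_(i < m.+2) X i * c k (m.+1 - i) by [].
rewrite big_ord_recl X0 mul0r add0r.
rewrite (reindex_inj rev_ord_inj) /=; apply: eq_bigr => i _.
rewrite /bump /= add1n X_succ subSS; congr (_ * c k _).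
have := ltn_ord i; lia.
Qed.

Lemma term (a b : R) k : (b *: 'X^k) * ('X * a%:P) = (a * b) *: 'X^(k.+1).
Proof. rewrite -!mul_polyC polyCM exprS; ring. Qed.

Lemma main_succ m :
  FCYC R P m.+1 = \sum_(i < m.+1) FCYC R P i * ('X * (A (m - i))%:P).
Proof.
have c0' : c 0 m.+1 = 0 by rewrite c0.
rewrite FCYC_val big_ord_recl c0' scale0r add0r.
under eq_bigr => k _ do rewrite lift0 cstep scaler_suml.
rewrite exchange_big /=; apply: eq_bigr => i _.
rewrite FCYC_val mulr_suml.
under [RHS]eq_bigr => k _ do rewrite term.
rewrite [RHS](big_ord_widen m.+1 (fun k => (A (m - i) * c k i) *: 'X^(k.+1))); last first.
  by rewrite ltnS -ltnS ltn_ord.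
rewrite [RHS]big_mkcond /=; apply: eq_bigr => k _.
case: ifP => // /negbT; rewrite -leqNgt => lt.
by rewrite c_big // mulr0 scale0r.
Qed.

End Main.

Theorem lemma5p9 (R : comUnitRingType)
    (hQ : forall n : nat, (n.+1)%:R \is a @GRing.unit R)
    (P : pred nat) :
  fps_mul (FCYC R P) (denomCYC R P) = @fps_one {poly R}.
Proof.
apply: functional_extensionality => n.
case: n => [|m].
  rewrite /fps_mul big_ord1 /= /fps_one /= mulr1 (FCYC_val hQ) big_ord1 /=.
  by rewrite /fps_one /= scale1r expr0.
rewrite /fps_mul big_ord_recr /= subnn /= mulr1 (main_succ hQ) /fps_one /=.
rewrite -[RHS](subrr (\sum_(i < m.+1) FCYC R P i * ('X * (fps_comp (expP R (predm1 P)) (TP R P) (m - i))%:P))).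
rewrite addrC; congr (_ + _).
rewrite -sumrN; apply: eq_bigr => i _.
by rewrite /= subSn ?mulrN // -ltnS ltn_ord.
Qed.
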